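(* Let $r\ge1$ and $n\ge 1$ be integers, and let $I_1\subseteq\mathbb{F}_3^r$ be the set of all vectors whose entries lie in $\{0,1\}$ and which have exactly $k$ entries equal to $1$ for some $k\in[n,2n-1]$. Then for any pairwise distinct $A,B,C\in I_1$ and any $\alpha,\beta,\gamma\in\{1,2\}$, \[\alpha A\oplus\beta B\oplus\gamma C\neq 0.\]
   Context: Vectors in $\mathbb{F}_3^r$ are identified with $r$-trit ternary strings; $\oplus$ is componentwise addition modulo $3$ and $\alpha A$ is componentwise scalar multiplication modulo $3$. *)

(* Defs.v *)
From mathcomp Require Import all_boot all_order all_algebra.
Set Implicit Arguments. Unset Strict Implicit. Unset Printing Implicit Defensive.
Import GRing.Theory.
Local Open Scope ring_scope.

Definition ones_count (r : nat) (v : 'rV['F_3]_r) : nat :=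
  #|[set i : 'I_r | v 0 i == 1]|.

Definition in_I1 (r n : nat) (v : 'rV['F_3]_r) : Prop :=
  (forall i : 'I_r, v 0 i = 0 \/ v 0 i = 1) /\
  exists k : nat, (n <= k <= 2 * n - 1)%N /\ ones_count v = k.

(* Main.v *)
Require Import Defs.
From mathcomp Require Import all_boot all_order all_algebra.
From mathcomp Require Import zify.
Local Open Scope ring_scope.

Lemma ones_set_eq r (v : 'rV['F_3]_r) : ones_count v = #|[set i : 'I_r | v 0 i == 1]|.
Proof. by []. Qed.

Lemma key {r n : nat} (hn : (1 <= n)%N) {X Y Z : 'rV['F_3]_r}
  (hX : in_I1 n X) (hY : in_I1 n Y) (hZ : in_I1 n Z)
  (H : forall i, Z 0 i = X 0 i + Y 0 i) : False.
Proof.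
case: hX => hX [kx [/andP [kx1 kx2] ex]].
case: hY => hY [ky [/andP [ky1 ky2] ey]].
case: hZ => hZ [kz [/andP [kz1 kz2] ez]].
have EU : [set i : 'I_r | Z 0 i == 1] =
  [set i : 'I_r | X 0 i == 1] :|: [set i : 'I_r | Y 0 i == 1].
  apply/setP => i; rewrite !inE H.
  case: (hX i) => hx; case: (hY i) => hy; rewrite hx hy //.
  by case: (hZ i); rewrite H hx hy.
have EI : [set i : 'I_r | X 0 i == 1] :&: [set i : 'I_r | Y 0 i == 1] = set0.
  apply/setP => i; rewrite !inE.
  case: (hX i) => hx; case: (hY i) => hy; rewrite hx hy //.
  by case: (hZ i); rewrite H hx hy.
have := cardsUI [set i : 'I_r | X 0 i == 1] [set i : 'I_r | Y 0 i == 1].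
rewrite -EU EI cards0.
move: ex ey ez; rewrite /ones_count => -> -> ->.
lia.
Qed.

Lemma alleq {r n : nat} {X Y Z : 'rV['F_3]_r}
  (hX : in_I1 n X) (hY : in_I1 n Y) (hZ : in_I1 n Z)
  (H : forall i, X 0 i + Y 0 i + Z 0 i = 0) : X = Y.
Proof.
apply/rowP => i.
move: (H i); case: (hX.1 i) => ->; case: (hY.1 i) => ->; case: (hZ.1 i) => ->;
  by move=> /eqP E; apply/eqP; move: E.
Qed.

Theorem theorem4p2 (r n : nat) (hr : (1 <= r)%N) (hn : (1 <= n)%N)
  (A B C : 'rV['F_3]_r)
  (hA : in_I1 n A) (hB : in_I1 n B) (hC : in_I1 n C)
  (hAB : A <> B) (hAC : A <> C) (hBC : B <> C)
  (alpha beta gamma : 'F_3)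
  (ha : alpha = 1 \/ alpha = 2) (hb : beta = 1 \/ beta = 2) (hc : gamma = 1 \/ gamma = 2) :
  alpha *: A + beta *: B + gamma *: C <> 0.
Proof.
move=> E.
have H i : alpha * A 0 i + beta * B 0 i + gamma * C 0 i = 0.
  by move/matrixP: E => /(_ 0 i); rewrite !mxE.
have T : forall (P : 'F_3 -> 'F_3 -> 'F_3 -> Prop), 
  (forall i, P (A 0 i) (B 0 i) (C 0 i)) -> forall i, P (A 0 i) (B 0 i) (C 0 i) by [].
case: ha => ?; case: hb => ?; case: hc => ?; subst.
- apply: hAB; apply: (alleq hA hB hC) => i.
  move: (H i); case: (hA.1 i) => ->; case: (hB.1 i) => ->; case: (hC.1 i) => ->;
  by move=> /eqP E'; apply/eqP; move: E'.
- apply: (key hn hA hB hC) => i.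
  move: (H i); case: (hA.1 i) => ->; case: (hB.1 i) => ->; case: (hC.1 i) => ->;
  by move=> /eqP E'; apply/eqP; move: E'.
- apply: (key hn hA hC hB) => i.
  move: (H i); case: (hA.1 i) => ->; case: (hB.1 i) => ->; case: (hC.1 i) => ->;
  by move=> /eqP E'; apply/eqP; move: E'.
- apply: (key hn hB hC hA) => i.
  move: (H i); case: (hA.1 i) => ->; case: (hB.1 i) => ->; case: (hC.1 i) => ->;
  by move=> /eqP E'; apply/eqP; move: E'.
- apply: (key hn hB hC hA) => i.
  move: (H i); case: (hA.1 i) => ->; case: (hB.1 i) => ->; case: (hC.1 i) => ->;
  by move=> /eqP E'; apply/eqP; move: E'.
- apply: (key hn hA hC hB) => i.
  move: (H i); case: (hA.1 i) => ->; case: (hB.1 i) => ->; case: (hC.1 i) => ->;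
  by move=> /eqP E'; apply/eqP; move: E'.
- apply: (key hn hA hB hC) => i.
  move: (H i); case: (hA.1 i) => ->; case: (hB.1 i) => ->; case: (hC.1 i) => ->;
  by move=> /eqP E'; apply/eqP; move: E'.
- apply: hAB; apply: (alleq hA hB hC) => i.
  move: (H i); case: (hA.1 i) => ->; case: (hB.1 i) => ->; case: (hC.1 i) => ->;
  by move=> /eqP E'; apply/eqP; move: E'.
Qed.
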